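(* In the setting below, for $1\le i,j\le r$ the block $N[i,j]$ of $N=\lim_{t\to\infty}(S+tP)^{-1}$ equals $$c_{ij}\begin{pmatrix}\mathbf{1}_{p_i}\mathbf{1}_{p_j}^\top&-\mathbf{1}_{p_i}\mathbf{1}_{q_j}^\top\\-\mathbf{1}_{q_i}\mathbf{1}_{p_j}^\top&\mathbf{1}_{q_i}\mathbf{1}_{q_j}^\top\end{pmatrix}$$ with $$c_{ii}=\frac{\ell}{\alpha(\alpha+\ell\gamma)(p_i+q_i)}\left(\frac\alpha\ell+\gamma-\frac{(p_i-q_i)^2}{p_i+q_i}\right),\qquad c_{ij}=\frac{-\ell}{\alpha(\alpha+\ell\gamma)}\cdot\frac{p_i-q_i}{p_i+q_i}\cdot\frac{p_j-q_j}{p_j+q_j}\ \ (j\ne i).$$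
   Context: Let $n\ge3$, $\ell>0$, $\alpha\ge(n-2)\ell$, $S=\alpha I_n+\ell\mathbf{1}_n\mathbf{1}_n^\top$. For a real matrix $P$, $\Delta_i(P)=|P_{ii}|-\sum_{j\ne i}|P_{ij}|$. A signless Laplacian is a real symmetric $n\times n$ matrix $P$ with $P_{ij}\in\{0,1\}$ for $i\ne j$, $P_{ii}\ge0$, and $\Delta_i(P)\in\{0,2\}$ for all $i$; its graph $G$ has vertex set $\{1,\dots,n\}$, an edge $\{i,j\}$ ($i\ne j$) whenever $P_{ij}=1$, and a self-loop $\{i,i\}$ whenever $\Delta_i(P)=2$ (graphs with self-loops are not bipartite). Let $G_1,\dots,G_r$ be the bipartite connected components of $G$, $G_i$ having bipartition classes of sizes $p_i$ and $q_i$; order the vertices of each $G_i$ with the $p_i$-class first. $N[i,j]$ denotes the submatrix of $N$ with rows indexed by vertices of $G_i$ and columns by vertices of $G_j$. $\gamma=\sum_{i=1}^r\frac{(p_i-q_i)^2}{p_i+q_i}$. *)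

(* Defs.v *)
From HB Require Import structures.
From mathcomp Require Import all_boot all_order all_algebra.
Set Implicit Arguments. Unset Strict Implicit. Unset Printing Implicit Defensive.
Import Order.TTheory GRing.Theory Num.Theory.
Local Open Scope ring_scope.

Section Defs.
Variable R : realFieldType.
Variable n : nat.

Definition Smat (alpha ell : R) : 'M[R]_n := alpha%:M + ell *: const_mx 1.

Definition Delta (P : 'M[R]_n) (i : 'I_n) : R :=
  `|P i i| - \sum_(j < n | j != i) `|P i j|.

Definition is_signless_laplacian (P : 'M[R]_n) : Prop :=
  [/\ P^T = P,
      (forall i j, i != j -> P i j = 0 \/ P i j = 1),
      (forall i, 0 <= P i i) &
      (forall i, Delta P i = 0 \/ Delta P i = 2)].

Definition sl_edge (P : 'M[R]_n) : rel 'I_n := fun u v => (u != v) && (P u v == 1).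
Definition sl_loop (P : 'M[R]_n) (u : 'I_n) : bool := Delta P u == 2.

Definition gcomp (P : 'M[R]_n) (u : 'I_n) : {set 'I_n} := [set v | connect (sl_edge P) u v].

Definition bip_set (P : 'M[R]_n) (C : {set 'I_n}) : bool :=
  [forall u in C, ~~ sl_loop P u] &&
  [exists f : {ffun 'I_n -> bool},
     [forall u in C, forall v in C, sl_edge P u v ==> (f u != f v)]].

Definition bip_comps (P : 'M[R]_n) : {set {set 'I_n}} :=
  [set C : {set 'I_n} | [exists u, C == gcomp P u] && bip_set P C].

(* col : a bipartition of every bipartite component; the p-class of a component
   is its set of vertices coloured true, the q-class those coloured false *)
Definition proper_bicol (P : 'M[R]_n) (col : 'I_n -> bool) : Prop :=
  forall u v, gcomp P u \in bip_comps P -> sl_edge P u v -> col u != col v.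

Definition pcnt (col : 'I_n -> bool) (C : {set 'I_n}) : R := (#|[set w in C | col w]|)%:R.
Definition qcnt (col : 'I_n -> bool) (C : {set 'I_n}) : R := (#|[set w in C | ~~ col w]|)%:R.

Definition gamma (P : 'M[R]_n) (col : 'I_n -> bool) : R :=
  \sum_(C in bip_comps P) (pcnt col C - qcnt col C) ^+ 2 / (pcnt col C + qcnt col C).

Definition coef (P : 'M[R]_n) (col : 'I_n -> bool) (alpha ell : R)
    (C D : {set 'I_n}) : R :=
  let g := gamma P col in
  let pC := pcnt col C in let qC := qcnt col C in
  let pD := pcnt col D in let qD := qcnt col D in
  if C == D then
    ell / (alpha * (alpha + ell * g) * (pC + qC)) *
      (alpha / ell + g - (pC - qC) ^+ 2 / (pC + qC))
  else
    - ell / (alpha * (alpha + ell * g)) * ((pC - qC) / (pC + qC)) *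
      ((pD - qD) / (pD + qD)).

(* sign pattern of the block: +1 on the p-class, -1 on the q-class *)
Definition sgn (col : 'I_n -> bool) (u : 'I_n) : R := if col u then 1 else -1.

End Defs.

Definition converges_to (R : realFieldType) (f : R -> R) (L : R) : Prop :=
  forall eps : R, 0 < eps -> exists T : R, forall t : R, T <= t -> `|f t - L| < eps.

(* Main.v *)
Require Import Defs.
From HB Require Import structures.
From mathcomp Require Import all_boot all_order all_algebra.
From mathcomp Require Import ring lra.
Set Implicit Arguments. Unset Strict Implicit. Unset Printing Implicit Defensive.
Import Order.TTheory GRing.Theory Num.Theory.
Local Open Scope ring_scope.

Section Main.
Variable R : realFieldType.
Variable n : nat.
Variables (ell alpha : R) (P : 'M[R]_n) (col : 'I_n -> bool).
Hypothesis hsl : is_signless_laplacian P.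
Hypothesis hcol : proper_bicol P col.

Local Notation comp := (gcomp P).
Local Notation bip u := (gcomp P u \in bip_comps P).
Local Notation s := (sgn R col).

Lemma Psym u w : P u w = P w u.
Proof. by case: hsl => hT _ _ _; rewrite -{1}hT mxE. Qed.

Lemma edge_sym : symmetric (sl_edge P).
Proof. by move=> u w; rewrite /sl_edge eq_sym Psym. Qed.

Lemma csym : connect_sym (sl_edge P).
Proof. exact: sym_connect_sym edge_sym. Qed.

Lemma in_comp u : u \in comp u.
Proof. by rewrite inE connect0. Qed.

Lemma comp_eq u w : connect (sl_edge P) u w -> comp u = comp w.
Proof.
move=> cuw; apply/setP => x; rewrite !inE; apply/idP/idP => h.
  by apply: connect_trans h; rewrite csym.
by apply: connect_trans h.
Qed.

Lemma mem_comp u w : w \in comp u -> comp w = comp u.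
Proof. by rewrite inE => h; rewrite (comp_eq h). Qed.

Lemma edge_comp u w : sl_edge P u w -> comp w = comp u.
Proof. by move=> h; apply: mem_comp; rewrite inE connect1. Qed.

Lemma bipE u : bip u = bip_set P (comp u).
Proof. by rewrite inE; case: (bip_set _ _); rewrite ?andbT ?andbF //; apply/existsP; exists u. Qed.

Lemma sgn2 u : s u * s u = 1.
Proof. by rewrite /sgn; case: (col u); rewrite ?mulr1 ?mulrNN ?mulr1. Qed.

Lemma sgn_edge u w : bip u -> sl_edge P u w -> s w = - s u.
Proof.
move=> bu e; have := hcol bu e; rewrite /sgn.
by case: (col u); case: (col w); rewrite ?opprK.
Qed.

Lemma Poff u w : u != w -> P u w = 0 \/ P u w = 1.
Proof. by case: hsl => _ h _ _; apply: h. Qed.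

Lemma Pdiag u : 0 <= P u u.
Proof. by case: hsl. Qed.

Lemma Poff_ge0 u w : 0 <= P u w.
Proof.
case: (eqVneq u w) => [->|h]; first exact: Pdiag.
by case: (Poff h) => ->.
Qed.

Lemma DeltaE u : Delta P u = P u u - \sum_(w < n | w != u) P u w.
Proof.
rewrite /Delta ger0_norm ?Pdiag //; congr (_ - _).
by apply: eq_bigr => w _; rewrite ger0_norm ?Poff_ge0.
Qed.

Lemma Delta_cases u : Delta P u = 0 \/ Delta P u = 2.
Proof. by case: hsl. Qed.

Lemma Delta_ge0 u : 0 <= Delta P u.
Proof. by case: (Delta_cases u) => ->. Qed.

Definition zf (a : {set 'I_n} -> R) : 'cV[R]_n :=
  \col_u (if bip u then a (comp u) * s u else 0).

Lemma bip_noloop u : bip u -> Delta P u = 0.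
Proof.
rewrite bipE => /andP [/forall_inP h _].
have := h u (in_comp u); rewrite /sl_loop.
by case: (Delta_cases u) => ->; rewrite ?eqxx.
Qed.

Lemma Pz a : P *m zf a = 0.
Proof.
apply/matrixP => u j; rewrite (ord1 j) !mxE (bigD1 u) //= mxE.
case bu: (bip u).
  have hw : forall w, w != u -> P u w * zf a w 0 = - (P u w * (a (comp u) * s u)).
    move=> w wu; rewrite mxE; have uw : u != w by rewrite eq_sym.
    case: (Poff uw) => Puw; first by rewrite Puw !mul0r oppr0.
    have e : sl_edge P u w by rewrite /sl_edge uw Puw eqxx.
    rewrite (edge_comp e) bu (sgn_edge bu e).
    by rewrite /= !mulrN.
  rewrite (eq_bigr _ hw) sumrN -mulr_suml.
  have := bip_noloop bu; rewrite DeltaE => h.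
  by rewrite -mulrBl h mul0r.
rewrite mulr0 add0r big1 // => w wu; rewrite mxE.
case: (eqVneq (P u w) 0) => [->|Puw]; first by rewrite mul0r.
have uw : u != w by rewrite eq_sym.
have e : sl_edge P u w.
  by rewrite /sl_edge uw; case: (Poff uw) Puw => ->; rewrite ?eqxx.
by rewrite (edge_comp e) bu mulr0.
Qed.

Definition qf (A : 'M[R]_n) (y : 'cV[R]_n) : R := \sum_i y i 0 * (A *m y) i 0.

Lemma qfP_id (y : 'cV[R]_n) :
  2 * qf P y = \sum_u 2 * Delta P u * y u 0 ^+ 2 +
     \sum_u \sum_(w | w != u) P u w * (y u 0 + y w 0) ^+ 2.
Proof.
pose Y u := y u 0.
have e1 : qf P y = \sum_u (P u u * Y u ^+ 2 + \sum_(w | w != u) P u w * Y u * Y w).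
  apply: eq_bigr => u _; rewrite mxE (bigD1 u) //= mulrDr mulr_sumr; congr (_ + _).
    by rewrite /Y; ring.
  by apply: eq_bigr => w _; rewrite /Y; ring.
have e2 : \sum_u \sum_(w | w != u) P u w * Y w ^+ 2 =
          \sum_u \sum_(w | w != u) P u w * Y u ^+ 2.
  rewrite (exchange_big_dep xpredT) //=; apply: eq_bigr => u _.
  by apply: eq_big => w; [rewrite eq_sym | move=> _; rewrite Psym].
have e3 : \sum_u \sum_(w | w != u) P u w * (Y u + Y w) ^+ 2 =
   \sum_u \sum_(w | w != u) P u w * Y u ^+ 2 + \sum_u \sum_(w | w != u) P u w * Y w ^+ 2
   + 2 * \sum_u \sum_(w | w != u) P u w * Y u * Y w.
  rewrite -big_split mulr_sumr -big_split /=; apply: eq_bigr => u _.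
  rewrite -big_split mulr_sumr -big_split /=; apply: eq_bigr => w _; ring.
have e4 : \sum_u 2 * Delta P u * y u 0 ^+ 2 = 2 * \sum_u P u u * Y u ^+ 2
    - 2 * \sum_u \sum_(w | w != u) P u w * Y u ^+ 2.
  rewrite !mulr_sumr -sumrB; apply: eq_bigr => u _; rewrite DeltaE -mulr_suml /Y; ring.
rewrite e1 e3 e2 e4 big_split /=; ring.
Qed.

Lemma qfP_ge0 y : 0 <= qf P y.
Proof.
have h : 0 <= 2 * qf P y.
  rewrite qfP_id; apply: addr_ge0; apply: sumr_ge0 => u _.
    by rewrite mulr_ge0 ?sqr_ge0 // mulr_ge0 ?Delta_ge0.
  by apply: sumr_ge0 => w _; rewrite mulr_ge0 ?sqr_ge0 ?Poff_ge0.
by rewrite pmulr_rge0 in h.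
Qed.

Lemma qf_mulE (A : 'M[R]_n) y : (A *m y = 0) -> qf A y = 0.
Proof. by move=> h; rewrite /qf big1 // => i _; rewrite h mxE mulr0. Qed.

Lemma ker_local (y : 'cV[R]_n) : P *m y = 0 ->
  (forall u, Delta P u * y u 0 ^+ 2 = 0) /\
  (forall u w, u != w -> P u w * (y u 0 + y w 0) ^+ 2 = 0).
Proof.
move=> h; have := qfP_id y; rewrite qf_mulE // mulr0 => /esym /eqP.
rewrite paddr_eq0; first last.
- by apply: sumr_ge0 => u _; apply: sumr_ge0 => w _; rewrite mulr_ge0 ?sqr_ge0 ?Poff_ge0.
- by apply: sumr_ge0 => u _; rewrite mulr_ge0 ?sqr_ge0 // mulr_ge0 ?Delta_ge0.
case/andP => /eqP h1 /eqP h2; split.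
  move=> u.
  have nn : forall v, true -> 0 <= 2 * Delta P v * y v 0 ^+ 2.
    by move=> v _; rewrite mulr_ge0 ?sqr_ge0 // mulr_ge0 ?Delta_ge0.
  have := psumr_eq0P nn h1 (i := u) isT; rewrite -mulrA => /eqP.
  by rewrite mulf_eq0 pnatr_eq0 /= => /eqP.
move=> u w uw.
have nn : forall v, true -> 0 <= \sum_(w | w != v) P v w * (y v 0 + y w 0) ^+ 2.
  by move=> v _; apply: sumr_ge0 => x _; rewrite mulr_ge0 ?sqr_ge0 ?Poff_ge0.
have h3 := psumr_eq0P nn h2 (i := u) isT.
have nn2 : forall x, x != u -> 0 <= P u x * (y u 0 + y x 0) ^+ 2.
  by move=> x _; rewrite mulr_ge0 ?sqr_ge0 ?Poff_ge0.
by apply: (psumr_eq0P nn2 h3); rewrite eq_sym.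
Qed.


Lemma comp_inv (h : 'I_n -> R) u0 :
  (forall x z, x \in comp u0 -> sl_edge P x z -> h z = h x) ->
  forall w, w \in comp u0 -> h w = h u0.
Proof.
move=> H w; rewrite inE => /connectP [p pth ->].
suff: forall x, x \in comp u0 -> path (sl_edge P) x p -> h (last x p) = h x.
  by move=> /(_ u0 (in_comp u0) pth).
elim: p {pth} => [//|z p IH] x xC /= /andP [exz pz].
have zC : z \in comp u0 by move: xC; rewrite !inE => hx; apply: connect_trans hx (connect1 exz).
by rewrite IH // (H x z).
Qed.

Lemma edge_neg (y : 'cV[R]_n) u w : P *m y = 0 -> sl_edge P u w -> y w 0 = - y u 0.
Proof.
move=> hy /andP [uw /eqP Puw]; have [_ h] := ker_local hy.
have := h u w uw; rewrite Puw mul1r => /eqP; rewrite sqrf_eq0 addrC addr_eq0.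
by move/eqP.
Qed.

Lemma loop0 (y : 'cV[R]_n) u : P *m y = 0 -> Delta P u = 2 -> y u 0 = 0.
Proof.
move=> hy hD; have [h _] := ker_local hy; have := h u; rewrite hD => /eqP.
by rewrite mulf_eq0 pnatr_eq0 /= sqrf_eq0 => /eqP.
Qed.

Definition acoef (y : 'cV[R]_n) (C : {set 'I_n}) : R :=
  oapp (fun r => y r 0 * s r) 0 [pick r in C].

Lemma ker_zf (y : 'cV[R]_n) : P *m y = 0 -> y = zf (acoef y).
Proof.
move=> hy; apply/matrixP => u j; rewrite (ord1 j) mxE.
case bu: (bip u).
  rewrite /acoef; case: pickP => [r rC | none]; last by have := none u; rewrite in_comp.
  have hinv := @comp_inv (fun x => y x 0 * s x) u.
  rewrite /= hinv //; first by rewrite -mulrA sgn2 mulr1.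
  move=> x z xC e; have bx : bip x by rewrite (mem_comp xC) bu.
  by rewrite (edge_neg hy e) (sgn_edge bx e) mulrNN.
have hsq := @comp_inv (fun x => y x 0 ^+ 2) u.
have hsq' : forall w, w \in comp u -> y w 0 ^+ 2 = y u 0 ^+ 2.
  by apply: hsq => x z _ e; rewrite (edge_neg hy e) sqrrN.
move: bu; rewrite bipE /bip_set.
case: (boolP [forall x in comp u, ~~ sl_loop P x]) => hl /=.
  move=> /negbT nex; apply/eqP; apply: contraT => yu0.
  case/negP: nex; apply/existsP; exists [ffun x => 0 < y x 0].
  apply/forall_inP => x xC; apply/forall_inP => z zC; apply/implyP => e.
  rewrite !ffunE (edge_neg hy e) oppr_gt0.
  have : y x 0 != 0.
    by apply: contra yu0 => /eqP h0; rewrite -sqrf_eq0 -(hsq' x xC) h0 expr0n.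
  by case: ltrgtP.
move=> _; case/forall_inPn: hl => x xC; rewrite negbK /sl_loop => /eqP hx.
have := hsq' x xC; rewrite (loop0 hy hx) expr0n /= => /esym /eqP.
by rewrite sqrf_eq0 => /eqP.
Qed.

Lemma bip_compsE D : D \in bip_comps P -> exists x, D = comp x.
Proof. by rewrite inE => /andP [/existsP [x /eqP ->] _]; exists x. Qed.

Lemma regroup (F : {set 'I_n} -> 'I_n -> R) :
  \sum_k (if bip k then F (comp k) k else 0) =
  \sum_(D in bip_comps P) \sum_(k in D) F D k.
Proof.
rewrite -big_mkcond /= (partition_big (fun k => comp k) (fun D => D \in bip_comps P)) //=.
apply: eq_bigr => D hD; have [x Dx] := bip_compsE hD.
apply: eq_big => k.
  apply/andP/idP => [[_ /eqP <-]|kD]; first exact: in_comp.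
  have e : comp k = D by rewrite Dx (mem_comp (u := x)) // -Dx.
  by rewrite e hD eqxx.
by move=> /andP [_ /eqP ->].
Qed.

Definition mm (D : {set 'I_n}) := pcnt R col D + qcnt R col D.
Definition dd (D : {set 'I_n}) := pcnt R col D - qcnt R col D.

Lemma cnt_sum (D : {set 'I_n}) (b : bool) :
  \sum_(k in D | col k == b) (1 : R) = (#|[set w in D | col w == b]|)%:R.
Proof.
rewrite -sumr_const; apply: eq_bigl => k; by rewrite !inE.
Qed.

Lemma sum_s (D : {set 'I_n}) : \sum_(k in D) s k = dd D.
Proof.
rewrite (bigID (fun k => col k)) /=.
rewrite /dd /pcnt /qcnt.
have -> : [set w in D | col w] = [set w in D | col w == true].
  by apply/setP => w; rewrite !inE eqb_id.
have -> : [set w in D | ~~ col w] = [set w in D | col w == false].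
  by apply/setP => w; rewrite !inE eqbF_neg.
rewrite -!cnt_sum -sumrN; congr (_ + _); apply: eq_big => k.
- by rewrite eqb_id.
- by rewrite /sgn => /andP [_ ->].
- by rewrite eqbF_neg.
- by rewrite /sgn => /andP [_ /negbTE ->].
Qed.

Lemma sum_1 (D : {set 'I_n}) : \sum_(k in D) (1 : R) = mm D.
Proof.
rewrite (bigID (fun k => col k)) /= /mm /pcnt /qcnt.
have -> : [set w in D | col w] = [set w in D | col w == true].
  by apply/setP => w; rewrite !inE eqb_id.
have -> : [set w in D | ~~ col w] = [set w in D | col w == false].
  by apply/setP => w; rewrite !inE eqbF_neg.
rewrite -!cnt_sum; congr (_ + _); apply: eq_bigl => k.
- by rewrite eqb_id.
- by rewrite eqbF_neg.
Qed.

Lemma mm_gt0 D : D \in bip_comps P -> 0 < mm D.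
Proof.
move=> hD; have [x Dx] := bip_compsE hD; rewrite -sum_1 (bigD1 x) ?Dx ?in_comp //=.
by rewrite ltr_pwDl ?ltr01 // sumr_ge0.
Qed.

Lemma gamma_ge0 : 0 <= gamma P col.
Proof.
apply: sumr_ge0 => D hD; apply: mulr_ge0; first exact: sqr_ge0.
by rewrite invr_ge0 ltW // (mm_gt0 hD).
Qed.

Hypotheses (hal : 0 < alpha) (hell : 0 < ell).

Local Notation g := (gamma P col).

Lemma agam_gt0 : 0 < alpha + ell * g.
Proof. have h := gamma_ge0. apply: (lt_le_trans hal); rewrite lerDl; exact: mulr_ge0 (ltW hell) h. Qed.

Lemma coefE C D : C \in bip_comps P -> D \in bip_comps P ->
  coef P col alpha ell C D = (if C == D then (alpha * mm C)^-1 else 0)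
    - ell / (alpha * (alpha + ell * g)) * (dd C / mm C) * (dd D / mm D).
Proof.
move=> hC hD; have mC := mm_gt0 hC; have mD := mm_gt0 hD; have ag := agam_gt0.
rewrite /coef /=; case: eqP => [<-|_].
  rewrite -/(mm C) -/(dd C); field.
  by rewrite !gt_eqF.
rewrite /mm /dd; ring.
Qed.

Lemma SMsum C (a : {set 'I_n} -> R) Z : C \in bip_comps P ->
  Z = \sum_(D in bip_comps P) a D * dd D ->
  \sum_(D in bip_comps P) coef P col alpha ell C D *
       (alpha * a D * mm D + ell * Z * dd D) = a C.
Proof.
move=> hC HZ; have mC := mm_gt0 hC; have ag := agam_gt0.
have hsum : \sum_(D in bip_comps P) dd D / mm D * (alpha * a D * mm D + ell * Z * dd D)
   = (alpha + ell * g) * Z.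
  have -> : \sum_(D in bip_comps P) dd D / mm D * (alpha * a D * mm D + ell * Z * dd D)
     = \sum_(D in bip_comps P) (alpha * (a D * dd D) + ell * Z * (dd D ^+ 2 / mm D)).
    apply: eq_bigr => D hD; have mD := mm_gt0 hD; field.
    by rewrite gt_eqF.
  rewrite big_split /= -!mulr_sumr -HZ /gamma; ring.
rewrite (bigD1 C) //= in hsum; rewrite (bigD1 C) //=.
set X := (fun D => alpha * a D * mm D + ell * Z * dd D).
have -> : \sum_(D in bip_comps P | D != C) coef P col alpha ell C D * X D =
   - (ell / (alpha * (alpha + ell * g)) * (dd C / mm C)) *
   \sum_(D in bip_comps P | D != C) dd D / mm D * X D.
  rewrite mulr_sumr; apply: eq_bigr => D /andP [hD DC].
  by rewrite coefE // eq_sym (negbTE DC); ring.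
move: hsum; rewrite coefE // eqxx /X => hsum.
have -> : \sum_(D in bip_comps P | D != C) dd D / mm D * X D =
   (alpha + ell * g) * Z - dd C / mm C * (alpha * a C * mm C + ell * Z * dd C).
  by rewrite -hsum /X; ring.
field; by rewrite !gt_eqF.
Qed.


Definition Nm : 'M[R]_n := \matrix_(u, w)
  (if bip u && bip w then coef P col alpha ell (comp u) (comp w) * s u * s w else 0).

Lemma PNm : P *m Nm = 0.
Proof.
apply/matrixP => u w; rewrite !mxE.
case bw: (bip w).
  have := Pz (fun C => coef P col alpha ell C (comp w) * s w).
  move/matrixP => /(_ u 0); rewrite !mxE => h; rewrite -[X in _ = X]h.
  apply: eq_bigr => k _; rewrite !mxE bw andbT.
  by case: (bip k); rewrite // mulrAC.
by rewrite big1 // => k _; rewrite mxE bw andbF mulr0.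
Qed.

Lemma Sz (y : 'cV[R]_n) k :
  (@Smat R n alpha ell *m y) k 0 = alpha * y k 0 + ell * \sum_j y j 0.
Proof.
rewrite mxE (eq_bigr (fun j => alpha *+ (k == j) * y j 0 + ell * y j 0)); last first.
  by move=> j _; rewrite !mxE mulr1 mulrDl.
rewrite big_split /= -mulr_sumr (bigD1 k) //= eqxx mulr1n big1 ?addr0 //.
by move=> j jk; rewrite eq_sym (negbTE jk) mulr0n mul0r.
Qed.

Lemma NSz a : Nm *m (@Smat R n alpha ell *m zf a) = zf a.
Proof.
apply/matrixP => u j; rewrite (ord1 j) !mxE.
set Z := \sum_j zf a j 0.
have HZ : Z = \sum_(D in bip_comps P) a D * dd D.
  rewrite /Z (eq_bigr (fun k => if bip k then a (comp k) * s k else 0)); last first.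
    by move=> k _; rewrite mxE.
  rewrite (regroup (fun D k => a D * s k)); apply: eq_bigr => D _; by rewrite -sum_s mulr_sumr.
case bu: (bip u); last first.
  by rewrite big1 // => k _; rewrite Sz mxE bu /= mul0r.
rewrite (eq_bigr (fun k => if bip k then coef P col alpha ell (comp u) (comp k) * s u * s k *
    (alpha * (a (comp k) * s k) + ell * Z) else 0)); last first.
  move=> k _; rewrite Sz !mxE bu /=; case: (bip k) => //=; by rewrite mul0r.
rewrite (regroup (fun D k => coef P col alpha ell (comp u) D * s u * s k * (alpha * (a D * s k) + ell * Z))).
rewrite (eq_bigr (fun D => coef P col alpha ell (comp u) D * (alpha * a D * mm D + ell * Z * dd D) * s u)); last first.
  move=> D _.
  set c := coef P col alpha ell (comp u) D.
  rewrite (eq_bigr (fun k => c * s u * alpha * a D * 1 + c * s u * ell * Z * s k)); last first.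
    move=> k _; have := sgn2 k; move: (s k) => sk h2.
    transitivity (c * s u * (alpha * a D * (sk * sk) + ell * Z * sk)); first ring.
    rewrite h2; ring.
  rewrite big_split /= -!mulr_sumr sum_1 sum_s; ring.
by rewrite -mulr_suml SMsum.
Qed.

Lemma col_mulmx m p (A : 'M[R]_(m, n)) (B : 'M[R]_(n, p)) j :
  matrix.col j (A *m B) = A *m matrix.col j B.
Proof. by apply/matrixP => i k; rewrite !mxE; apply: eq_bigr => l _; rewrite !mxE. Qed.

Local Notation S := (@Smat R n alpha ell).

Lemma coef_sym C D : coef P col alpha ell C D = coef P col alpha ell D C.
Proof. rewrite /coef eq_sym; case: eqP => [->|_] //; ring. Qed.

Lemma Nm_sym i k : Nm i k = Nm k i.
Proof. by rewrite !mxE andbC coef_sym; case: (_ && _) => //; ring. Qed.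

Lemma S_sym i k : S i k = S k i.
Proof. by rewrite !mxE eq_sym. Qed.

Lemma QW : exists W : 'M[R]_n, 1%:M - S *m Nm = P *m W.
Proof.
have QT : (1%:M - S *m Nm)^T = 1%:M - Nm *m S.
  apply/matrixP => i j; rewrite !mxE eq_sym; congr (_ - _).
  by apply: eq_bigr => k _; rewrite Nm_sym S_sym mulrC.
have hsub : ((1%:M - S *m Nm)^T <= P)%MS.
  rewrite submxE QT; apply/eqP/matrixP => i j.
  rewrite [RHS]mxE; transitivity ((matrix.col j ((1%:M - Nm *m S) *m cokermx P)) i 0).
    by rewrite !mxE.
    rewrite col_mulmx; set c := matrix.col j (cokermx P).
    have Pc : P *m c = 0 by rewrite /c -col_mulmx mulmx_coker col0.
    rewrite mulmxBl mul1mx -mulmxA {2}(ker_zf Pc) NSz -(ker_zf Pc) subrr.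
    by rewrite mxE.
case/submxP: hsub => D hD; exists D^T.
case: hsl => hT _ _ _.
by rewrite -[LHS]trmxK hD trmx_mul hT.
Qed.

Lemma qfM (y : 'cV[R]_n) t : 0 <= t ->
  alpha * \sum_i y i 0 ^+ 2 <= qf (S + t *: P) y.
Proof.
move=> t0; set Z := \sum_j y j 0.
have e : qf (S + t *: P) y = alpha * \sum_i y i 0 ^+ 2 + ell * Z ^+ 2 + t * qf P y.
  rewrite /qf mulmxDl -scalemxAl.
  rewrite (eq_bigr (fun i => alpha * y i 0 ^+ 2 + ell * (y i 0 * Z) + t * (y i 0 * (P *m y) i 0))); last first.
    move=> i _; have -> : (S *m y + t *: (P *m y)) i 0 = (S *m y) i 0 + (t *: (P *m y)) i 0 by rewrite mxE.
    rewrite Sz.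
    have -> : (t *: (P *m y)) i 0 = t * (P *m y) i 0 by rewrite mxE.
    rewrite -/Z; ring.
  rewrite !big_split /= -!mulr_sumr -mulr_suml -/Z; ring.
rewrite e -addrA lerDl; apply: addr_ge0; first by rewrite mulr_ge0 ?sqr_ge0 // ltW.
by rewrite mulr_ge0 ?qfP_ge0.
Qed.

Lemma sq_le_sum (y : 'cV[R]_n) k : y k 0 ^+ 2 <= \sum_i y i 0 ^+ 2.
Proof. by rewrite (bigD1 k) //= lerDl sumr_ge0 // => i _; rewrite sqr_ge0. Qed.

Lemma M_sym t : (S + t *: P)^T = S + t *: P.
Proof.
case: hsl => hT _ _ _.
apply/matrixP => i j; rewrite !mxE eq_sym; congr (_ + _ * _).
by rewrite -{1}hT mxE.
Qed.

Lemma M_unit t : 0 <= t -> (S + t *: P) \in unitmx.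
Proof.
move=> t0; rewrite -row_free_unit -kermx_eq0; apply/eqP/row_matrixP => i.
set r := row i _; rewrite row0.
have hr : r *m (S + t *: P) = 0 by apply/sub_kermxP; exact: row_sub.
have hy : (S + t *: P) *m r^T = 0.
  by rewrite -{1}M_sym -trmx_mul hr; apply/matrixP => a b; rewrite !mxE.
have := qfM r^T t0; rewrite qf_mulE // => h.
have hs : \sum_i r^T i 0 ^+ 2 = 0.
  apply/eqP; rewrite eq_le sumr_ge0 ?andbT => [|k _]; last exact: sqr_ge0.
  by rewrite -(pmulr_rle0 _ hal).
apply/rowP => k; rewrite mxE.
have := psumr_eq0P (fun i _ => sqr_ge0 (r^T i 0)) hs (i := k) isT.
by rewrite !mxE => /eqP; rewrite sqrf_eq0 => /eqP.
Qed.

Lemma Xbound t : 0 <= t -> forall k e, `|invmx (S + t *: P) k e| <= alpha^-1.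
Proof.
move=> t0 k e; set M := S + t *: P; have hu := M_unit t0.
set y := matrix.col e (invmx M).
have hMy : M *m y = matrix.col e 1%:M by rewrite /y -col_mulmx mulmxV.
have hq : qf M y = y e 0.
  rewrite /qf hMy (bigD1 e) //= big1 ?addr0.
    by rewrite !mxE eqxx mulr1.
  by move=> i ie; rewrite !mxE (negbTE ie) mulr0.
have h1 := qfM y t0; rewrite -/M hq in h1.
have h2 := sq_le_sum y k; have h3 := sq_le_sum y e.
have -> : invmx M k e = y k 0 by rewrite mxE.
move: h1 h2 h3; set Sg := \sum_i _; move: (y e 0) (y k 0) => ye yk h1 h2 h3.
have s0 : alpha * ye ^+ 2 <= ye.
  by apply: le_trans h1; rewrite ler_pM2l.
have s1 : alpha * ye <= 1.
  case: (lerP ye 0) => hye; first by rewrite (le_trans _ (@ler01 R)) // pmulr_rle0.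
  nra.
have s2 : (alpha * yk) ^+ 2 <= 1.
  have s3 : alpha * yk ^+ 2 <= ye.
    by apply: le_trans h1; rewrite ler_pM2l.
  apply: le_trans s1; rewrite exprMn expr2 -mulrA ler_pM2l //.
have hb : alpha * alpha^-1 = 1 by rewrite mulfV // gt_eqF.
have b0 : 0 < alpha^-1 by rewrite invr_gt0.
move: hb b0; move: (alpha^-1) => b hb b0.
have hz : -1 <= alpha * yk <= 1.
  move: s2; move: (alpha * yk) => z s2; apply/andP; split; nra.
have -> : yk = (alpha * yk) * b by rewrite mulrAC hb mul1r.
move: hz; move: (alpha * yk) => z /andP [hz1 hz2].
rewrite ler_norml; apply/andP; split; nra.
Qed.

Lemma main_conv u v : bip u -> bip v ->
  converges_to (fun t => invmx (S + t *: P) u v)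
    (coef P col alpha ell (comp u) (comp v) * s u * s v).
Proof.
move=> bu bv eps he.
have [W hW] := QW.
set B := \sum_k (1 + \sum_j `|S j k| / alpha) * `|W k v|.
have B0 : 0 <= B.
  apply: sumr_ge0 => k _; apply: mulr_ge0 => //; apply: addr_ge0 => //.
  by apply: sumr_ge0 => j _; rewrite divr_ge0 // ltW.
exists ((B + 1) / eps) => t ht.
have hB : B + 1 <= t * eps by rewrite -ler_pdivrMr.
have t0 : 0 < t.
  have : 0 < t * eps by apply: lt_le_trans hB; rewrite ltr_wpDl.
  by rewrite pmulr_lgt0.
set M := S + t *: P; have hu := M_unit (ltW t0).
have e1 : M *m Nm = S *m Nm by rewrite mulmxDl -scalemxAl PNm scaler0 addr0.
have e2 : invmx M - Nm = invmx M *m (P *m W).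
  by rewrite -hW -e1 -{1}(mulmxV hu) -mulmxBr mulKmx.
have e3 : invmx M *m P = t^-1 *: (1%:M - invmx M *m S).
  have h := mulVmx hu; rewrite /M mulmxDr -scalemxAr in h.
  by rewrite -h [X in X - _]addrC addrK scalerA mulVf ?scale1r // gt_eqF.
have key : invmx M - Nm = t^-1 *: ((1%:M - invmx M *m S) *m W).
  by rewrite e2 mulmxA e3 -scalemxAl.
have NL : Nm u v = coef P col alpha ell (comp u) (comp v) * s u * s v.
  by rewrite mxE bu bv.
rewrite -NL.
have -> : invmx M u v - Nm u v = (invmx M - Nm) u v by rewrite !mxE.
rewrite key mxE normrM ger0_norm ?invr_ge0 ?ltW // mulrC ltr_pdivrMr //.
apply: le_lt_trans (_ : B < eps * t); last by rewrite mulrC; apply: lt_le_trans hB; rewrite ltrDl.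
rewrite mxE; apply: le_trans (ler_norm_sum _ _ _) _; apply: ler_sum => k _.
rewrite normrM ler_wpM2r //.
rewrite mxE; apply: le_trans (ler_normD _ _) _.
apply: lerD; first by rewrite mxE; case: (u == k); rewrite ?normr1 ?normr0.
rewrite mxE normrN mxE; apply: le_trans (ler_norm_sum _ _ _) _; apply: ler_sum => j _.
rewrite normrM mulrC ler_wpM2l //.
exact: Xbound (ltW t0) u j.
Qed.

End Main.

Theorem corollary4p9 (R : realFieldType) (n : nat) (ell alpha : R)
    (P : 'M[R]_n) (col : 'I_n -> bool) :
  (3 <= n)%N -> 0 < ell -> (n - 2)%:R * ell <= alpha ->
  is_signless_laplacian P ->
  proper_bicol P col ->
  forall u v : 'I_n,
    gcomp P u \in bip_comps P -> gcomp P v \in bip_comps P ->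
    converges_to (fun t : R => invmx (@Smat R n alpha ell + t *: P) u v)
      (coef P col alpha ell (gcomp P u) (gcomp P v) * sgn R col u * sgn R col v).
Proof.
move=> n3 hell hal hsl hcol u v bu bv.
have hal' : 0 < alpha.
  apply: lt_le_trans hal; rewrite pmulr_rgt0 // ltr0n subn_gt0.
  by apply: leq_trans n3.
exact: main_conv.
Qed.
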